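(* Let $c$ be a prefix equivariant statistic and $\theta>0$. Let $2\le k\le N$. If the increasing prefix $e_k=12\cdots k$ is negative, then the increasing prefix $e_{k-1}=12\cdots(k-1)$ is negative.
   Context: Permutations of $\{1,\dots,m\}$ are written in one-line notation; $\mathfrak S_m$ is the set of all of them. Fix $N\ge1$, a statistic $c:\bigcup_{m=1}^N\mathfrak S_m\to\mathbb Z_{\ge0}$ and a real $\theta>0$. Prefixes and containment: - A prefix is an element of $\bigcup_{m=1}^N\mathfrak S_m$. - $\pi^{(i)}\in\mathfrak S_i$ denotes the unique permutation with the same relative order as $\pi_1,\dots,\pi_i$. - A prefix $r\in\mathfrak S_n$ contains $p\in\mathfrak S_m$ if $r^{(m)}=p$. - For $p\in\mathfrak S_m$ and $\pi\in\mathfrak S_N$: $\pi$ is $p$-prefixed if $\pi^{(m)}=p$, and $p$-winnable if moreover $\pi_m=N$. Probabilities: - $D(p)=\sum_{p\text{-prefixed }\pi}\theta^{c(\pi)}$. - $S(p)=\big(\sum_{p\text{-winnable }\pi}\theta^{c(\pi)}\big)/D(p)$. - $S^c(p)=0$ for $p\in\mathfrak S_N$; for $p\in\mathfrak S_m$ with $m<N$, $S^c(p)=\big(\sum_{q'\in\mathfrak S_{m+1}\text{ containing }p}D(q')\bar S(q')\big)/D(p)$. - $\bar S(p)=\max(S(p),S^c(p))$. - $p$ is positive if $S(p)\ge S^c(p)$, and negative otherwise. Let $e_k=12\cdots k$. For $q\in\mathfrak S_k$ and $\pi\in\mathfrak S_m$ with $\pi_1<\cdots<\pi_k$, $\sigma_q\cdot\pi$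 is given by $(\sigma_q\cdot\pi)_i=\pi_{q_i}$ for $i\le k$ and $(\sigma_q\cdot\pi)_i=\pi_i$ for $i>k$. The statistic $c$ is prefix equivariant if $c(\pi)-c(\sigma_q\cdot\pi)=c(e_k)-c(q)$ for all $k\le m\le N$, all $q\in\mathfrak S_k$, and all $\pi\in\mathfrak S_m$ with $\pi_1<\cdots<\pi_k$. *)

(* Defs.v *)
From HB Require Import structures.
From mathcomp Require Import all_boot all_order all_algebra all_fingroup.
Set Implicit Arguments. Unset Strict Implicit. Unset Printing Implicit Defensive.
Import Order.TTheory GRing.Theory Num.Theory.

(* Conventions: a permutation of {1..m} in one-line notation is an element
   p : 'S_m (permutation of 'I_m = {0..m-1}); the paper's p_i is
   (pval p (i-1)) + 1, i.e. everything is shifted down by one. *)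

(* value of p at position i (0-based); 0 outside the range *)
Definition pval (m : nat) (p : 'S_m) (i : nat) : nat :=
  match @insub nat (fun j => j < m) 'I_m i with
  | Some j => val (p j)
  | None => 0
  end.

Definition contains (n : nat) (r : 'S_n) (m : nat) (p : 'S_m) : bool :=
  (m <= n) &&
  [forall a : 'I_m, forall b : 'I_m,
     (pval r a < pval r b) == (pval p a < pval p b)].

Definition winnable (N : nat) (pi : 'S_N) (m : nat) (p : 'S_m) : bool :=
  contains pi p && (pval pi m.-1 == N.-1).

Section Probabilities.
Variable R : realFieldType.
Variable N : nat.
Variable c : forall m : nat, 'S_m -> nat.
Variable theta : R.

Local Open Scope ring_scope.

Definition Dw (m : nat) (p : 'S_m) : R :=
  \sum_(pi : 'S_N | contains pi p) theta ^+ (c pi).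

Definition Sw (m : nat) (p : 'S_m) : R :=
  (\sum_(pi : 'S_N | winnable pi p) theta ^+ (c pi)) / Dw p.

(* Sbar computed with fuel; the fuel N - m suffices (see Sbar below). *)
Fixpoint Sbar_f (fuel : nat) (m : nat) (p : 'S_m) {struct fuel} : R :=
  match fuel with
  | 0 => Num.max (Sw p) 0
  | f.+1 =>
      Num.max (Sw p)
        (if (m < N)%N then
           (\sum_(q : 'S_m.+1 | contains q p) Dw q * Sbar_f f q) / Dw p
         else 0)
  end.

Definition Sc (m : nat) (p : 'S_m) : R :=
  if (m < N)%N then
    (\sum_(q : 'S_m.+1 | contains q p) Dw q * Sbar_f (N - m.+1) q) / Dw p
  else 0.

Definition Sbar (m : nat) (p : 'S_m) : R := Num.max (Sw p) (Sc p).

Definition positive (m : nat) (p : 'S_m) : bool := Sc p <= Sw p.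
Definition negative (m : nat) (p : 'S_m) : bool := Sw p < Sc p.

End Probabilities.

(* prefix equivariance: for k <= m <= N, q in S_k, pi in S_m with
   pi_1 < ... < pi_k, and pi' = sigma_q . pi, we have
   c(pi) - c(pi') = c(e_k) - c(q). sigma_q . pi is specified by its values. *)
Definition prefix_equivariant (N : nat) (c : forall m : nat, 'S_m -> nat) : Prop :=
  forall (k m : nat) (q : 'S_k) (pi pi' : 'S_m),
    (1 <= k)%N -> (k <= m)%N -> (m <= N)%N ->
    (forall i j : nat, (i < j)%N -> (j < k)%N -> (pval pi i < pval pi j)%N) ->
    (forall i : nat, pval pi' i =
        (if (i < k)%N then pval pi (pval q i) else pval pi i)) ->
    ((c m pi)%:Z - (c m pi')%:Z = (c k 1%g)%:Z - (c k q)%:Z)%R.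

(* Main.v *)
Require Import Defs.
From HB Require Import structures.
From mathcomp Require Import all_boot all_order all_algebra all_fingroup.
From mathcomp Require Import zify.
Import Order.TTheory GRing.Theory Num.Theory.
Set Implicit Arguments. Unset Strict Implicit. Unset Printing Implicit Defensive.
Notation pval := Defs.pval.

Lemma pvalE m (p : 'S_m) (o : 'I_m) : pval p o = nat_of_ord (p o).
Proof. by rewrite /pval valK. Qed.

Lemma pvalE' m (p : 'S_m) i (hi : i < m) : pval p i = nat_of_ord (p (Ordinal hi)).
Proof. exact: (pvalE p (Ordinal hi)). Qed.

Lemma pval_out m (p : 'S_m) i : m <= i -> pval p i = 0.
Proof. by move=> h; rewrite /pval insubN // -leqNgt. Qed.

Lemma pval_lt m (p : 'S_m) i : i < m -> pval p i < m.
Proof. by move=> hi; rewrite (pvalE' p hi). Qed.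

Lemma pval_inj m (p q : 'S_m) : (forall i, i < m -> pval p i = pval q i) -> p = q.
Proof.
move=> H; apply/permP => o; apply: val_inj; have := H o (ltn_ord o); by rewrite !pvalE.
Qed.

Lemma pval_injl m (p : 'S_m) i j : i < m -> j < m -> pval p i = pval p j -> i = j.
Proof.
move=> hi hj; rewrite (pvalE' p hi) (pvalE' p hj) => /val_inj /perm_inj.
by case.
Qed.

Lemma pval1 m i : i < m -> pval (1 : 'S_m)%g i = i.
Proof. by move=> hi; rewrite (pvalE' _ hi) perm1. Qed.

Lemma containsE n (r : 'S_n) m (p : 'S_m) :
  contains r p <-> (m <= n /\ forall i j, i < m -> j < m ->
     (pval r i < pval r j) = (pval p i < pval p j)).
Proof.
rewrite /contains; split.
  move/andP=> [hmn /forallP H]; split=> // i j hi hj.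
  by have /forallP /(_ (Ordinal hj)) /eqP := H (Ordinal hi).
move=> [hmn H]; apply/andP; split=> //; apply/forallP=> a; apply/forallP=> b.
by apply/eqP; apply: H.
Qed.

Lemma contains_sub n (r : 'S_n) m (q : 'S_m) l (p : 'S_l) :
  l <= m -> contains r q -> contains r p -> contains q p.
Proof.
move=> hlm /containsE [hmn Hq] /containsE [hln Hp]; apply/containsE; split=> //.
move=> i j hi hj; rewrite -Hq ?Hp //; exact: leq_trans hlm.
Qed.

Definition incr k m (r : 'S_m) :=
  forall i j, i < j -> j < k -> pval r i < pval r j.

Lemma incr_contains k n (a : 'S_n) m (r : 'S_m) :
  k <= m -> contains a r -> incr k r -> incr k a.
Proof.
move=> hkm /containsE [_ H] Hr i j hij hjk.
have hj : j < m by exact: leq_trans hjk hkm.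
rewrite H //; [exact: Hr | exact: ltn_trans hij hj].
Qed.

Lemma incr1 k m : k <= m -> incr k (1 : 'S_m)%g.
Proof.
move=> hkm i j hij hjk; have hj : j < m by exact: leq_trans hjk hkm.
by rewrite !pval1 // (ltn_trans hij hj).
Qed.

Lemma contains11 n m : m <= n -> contains (1 : 'S_n)%g (1 : 'S_m)%g.
Proof.
move=> hmn; apply/containsE; split=> // i j hi hj.
by rewrite !pval1 // ?(leq_trans hi hmn) ?(leq_trans hj hmn).
Qed.

Definition ev k (q : 'S_k) i := if i < k then pval q i else i.

Lemma ev_lt k (q : 'S_k) m i : k <= m -> i < m -> ev q i < m.
Proof.
move=> hkm him; rewrite /ev; case: ifP => // hik.
exact: leq_trans (pval_lt q hik) hkm.
Qed.

Lemma ev_inj k (q : 'S_k) i j : ev q i = ev q j -> i = j.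
Proof.
rewrite /ev; case: ifP => hi; case: ifP => hj //.
- exact: pval_injl.
- move=> e; have := pval_lt q hi; rewrite e => h; by rewrite h in hj.
- move=> e; have := pval_lt q hj; rewrite -e => h; by rewrite h in hi.
Qed.

Lemma evK k (q : 'S_k) i : ev q^-1 (ev q i) = i.
Proof.
case: (ltnP i k) => hi; last first.
  have hi2 : (i < k) = false by rewrite ltnNge hi.
  by rewrite /ev hi2 /= hi2.
rewrite /ev hi (pval_lt q hi).
have h2 := pval_lt q hi.
rewrite (pvalE' _ h2).
have -> : Ordinal h2 = q (Ordinal hi).
  by apply: val_inj; rewrite /= (pvalE' q hi).
by rewrite permK.
Qed.

Lemma evKV k (q : 'S_k) i : ev q (ev q^-1 i) = i.
Proof. by have := evK q^-1 i; rewrite invgK. Qed.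

Definition extf k (q : 'S_k) m (i : 'I_m) : 'I_m :=
  if k <= m then insubd i (ev q i) else i.

Lemma extf_inj k (q : 'S_k) m : injective (@extf k q m).
Proof.
move=> a b; rewrite /extf; case: ifP => hkm //.
move/(congr1 val); rewrite !val_insubd (ev_lt q hkm (ltn_ord a)) (ev_lt q hkm (ltn_ord b)).
by move/ev_inj/val_inj.
Qed.

Definition act k (q : 'S_k) m (r : 'S_m) : 'S_m :=
  perm (inj_comp (@perm_inj _ r) (@extf_inj k q m)).

Lemma pval_act k (q : 'S_k) m (r : 'S_m) i :
  k <= m -> pval (act q r) i = pval r (ev q i).
Proof.
move=> hkm; case: (ltnP i m) => him.
  rewrite (pvalE' _ him) permE /= /extf hkm.
  rewrite (pvalE' r (ev_lt q hkm him)); congr (val (r _)).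
  by apply: val_inj; rewrite /= val_insubd /= ev_lt.
rewrite !pval_out //; rewrite /ev; case: ifP => // hik.
by move: (leq_trans hkm him); rewrite leqNgt hik.
Qed.

Lemma actK k (q : 'S_k) m (r : 'S_m) : k <= m -> act q^-1 (act q r) = r.
Proof.
by move=> hkm; apply: pval_inj => i _; rewrite !pval_act // evKV.
Qed.

Lemma act_inj k (q : 'S_k) m : k <= m -> injective (@act k q m).
Proof. by move=> hkm a b e; rewrite -(actK q a hkm) -(actK q b hkm) e. Qed.

Lemma act1 k (q : 'S_k) : act q (1 : 'S_k)%g = q.
Proof.
apply: pval_inj => i hi; rewrite pval_act // pval1 /ev hi //.
exact: pval_lt.
Qed.

Lemma contains_act k (q : 'S_k) n (a : 'S_n) m (b : 'S_m) :
  k <= m -> contains (act q a) (act q b) = contains a b.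
Proof.
move=> hkm; apply/idP/idP.
  move/containsE=> [hmn H]; have hkn := leq_trans hkm hmn.
  apply/containsE; split=> // i j hi hj.
  have := H (ev q^-1 i) (ev q^-1 j) (ev_lt _ hkm hi) (ev_lt _ hkm hj).
  by rewrite !pval_act // !evKV.
move/containsE=> [hmn H]; have hkn := leq_trans hkm hmn.
apply/containsE; split=> // i j hi hj.
by rewrite !pval_act // H // ev_lt.
Qed.

Definition rnk n (p : 'S_n) k (i : 'I_k) : nat :=
  #|[pred j : 'I_k | pval p j < pval p i]|.

Lemma rnk_lt n (p : 'S_n) k (i : 'I_k) : rnk p i < k.
Proof.
rewrite /rnk; apply: (@leq_ltn_trans #|predC1 i|).
  apply: subset_leq_card; apply/subsetP => j; rewrite !inE.
  by apply: contraTneq => ->; rewrite ltnn.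
by rewrite cardC1 card_ord; case: k i => [[]|k].
Qed.

Lemma rnk_mono n (p : 'S_n) k (a b : 'I_k) :
  pval p a < pval p b -> rnk p a < rnk p b.
Proof.
move=> hab; apply: proper_card; apply/properP; split.
  by apply/subsetP => j; rewrite !inE => h; exact: ltn_trans h hab.
by exists a; rewrite !inE ?ltnn.
Qed.

Lemma rnk_cmp n (p : 'S_n) k (a b : 'I_k) : k <= n ->
  (rnk p a < rnk p b) = (pval p a < pval p b).
Proof.
move=> hkn; case: (ltngtP (pval p a) (pval p b)) => h.
- exact: rnk_mono.
- by apply/negbTE; rewrite -leqNgt ltnW // rnk_mono.
- have e : a = b.
    apply: val_inj; apply: (@pval_injl n p) => //; exact: leq_trans (ltn_ord _) hkn.
  by rewrite e ltnn.
Qed.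

Lemma rnk_inj n (p : 'S_n) k : k <= n ->
  injective (fun i : 'I_k => Ordinal (rnk_lt p i)).
Proof.
move=> hkn a b [] e; case: (ltngtP (pval p a) (pval p b)) => h.
- by move: (rnk_mono h); rewrite e ltnn.
- by move: (rnk_mono h); rewrite e ltnn.
- apply: val_inj; apply: (@pval_injl n p) h; exact: leq_trans (ltn_ord _) hkn.
Qed.

Lemma pattern_exists n (p : 'S_n) k : k <= n ->
  exists q : 'S_k, contains p q /\ forall i : 'I_k, pval q i = rnk p i.
Proof.
move=> hkn; exists (perm (@rnk_inj n p k hkn)); split; last first.
  by move=> i; rewrite pvalE permE.
apply/containsE; split=> // i j hi hj.
by rewrite (pvalE' _ hi) (pvalE' _ hj) !permE /= rnk_cmp.
Qed.

From mathcomp Require Import ring lra.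
Local Open Scope ring_scope.

Lemma equiv_w (R : realFieldType) N (c : forall m : nat, 'S_m -> nat) (theta : R)
  k (q : 'S_k) (rho : 'S_N) :
  prefix_equivariant N c -> (1 <= k)%N -> (k <= N)%N -> incr k rho ->
  theta ^+ c k 1%g * theta ^+ c N (act q rho) = theta ^+ c k q * theta ^+ c N rho.
Proof.
move=> Heq hk1 hkN hr.
have := Heq k N q rho (act q rho) hk1 hkN (leqnn N) hr.
have H : forall i, pval (act q rho) i =
   (if (i < k)%N then pval rho (pval q i) else pval rho i).
  by move=> i; rewrite pval_act // /ev; case: ifP.
move/(_ H) => E.
have E' : (c k 1%g + c N (act q rho) = c k q + c N rho)%N by lia.
by rewrite -!exprD E'.
Qed.

Definition numat (R : realFieldType) N (c : forall m : nat, 'S_m -> nat) (theta : R)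
  m (p : 'S_m) j : R :=
  \sum_(pi : 'S_N | contains pi p && (pval pi j == N.-1)) theta ^+ c N pi.

Lemma Sw_numat (R : realFieldType) N c (theta : R) m (p : 'S_m) :
  Sw N c theta p = numat N c theta p m.-1 / Dw N c theta p.
Proof. by []. Qed.

Lemma ratio (R : realFieldType) (A B x x' y y' : R) :
  A != 0 -> B != 0 -> A * x' = B * x -> A * y' = B * y -> x' / y' = x / y.
Proof.
move=> hA hB hx hy.
have -> : x' = B * x / A by rewrite -hx; field.
have -> : y' = B * y / A by rewrite -hy; field.
have [->|hy0] := eqVneq y 0; first by rewrite !mulr0 mul0r !invr0 !mulr0.
by field; rewrite hA hB hy0.
Qed.

Lemma Dw_act (R : realFieldType) N c (theta : R) k (q : 'S_k) m (r : 'S_m) :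
  prefix_equivariant N c -> (1 <= k)%N -> (k <= m)%N -> (k <= N)%N -> incr k r ->
  theta ^+ c k 1%g * Dw N c theta (act q r) = theta ^+ c k q * Dw N c theta r.
Proof.
move=> Heq hk1 hkm hkN hr.
rewrite /Dw !mulr_sumr (reindex_inj (act_inj (q:=q) hkN)) /=.
apply: eq_big => pi; first by rewrite contains_act.
rewrite contains_act // => hpi; apply: equiv_w => //.
exact: incr_contains hkm hpi hr.
Qed.

Lemma numat_act (R : realFieldType) N c (theta : R) k (q : 'S_k) m (r : 'S_m) j :
  prefix_equivariant N c -> (1 <= k)%N -> (k <= m)%N -> (k <= N)%N -> incr k r ->
  theta ^+ c k 1%g * numat N c theta (act q r) j =
  theta ^+ c k q * numat N c theta r (ev q j).
Proof.
move=> Heq hk1 hkm hkN hr.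
rewrite /numat !mulr_sumr (reindex_inj (act_inj (q:=q) hkN)) /=.
apply: eq_big => pi; first by rewrite contains_act // pval_act.
rewrite contains_act // => /andP [hpi _]; apply: equiv_w => //.
exact: incr_contains hkm hpi hr.
Qed.

Lemma sum_act (R : realFieldType) N c (theta : R) k (q : 'S_k) m (r : 'S_m)
  (F : 'S_m.+1 -> R) :
  prefix_equivariant N c -> (1 <= k)%N -> (k <= m)%N -> (k <= N)%N -> incr k r ->
  (forall x, contains x r -> F (act q x) = F x) ->
  theta ^+ c k 1%g * (\sum_(x : 'S_m.+1 | contains x (act q r)) Dw N c theta x * F x)
  = theta ^+ c k q * (\sum_(x : 'S_m.+1 | contains x r) Dw N c theta x * F x).
Proof.
move=> Heq hk1 hkm hkN hr hF.
have hkm1 : (k <= m.+1)%N by exact: leq_trans hkm (leqnSn m).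
rewrite !mulr_sumr (reindex_inj (act_inj (q:=q) hkm1)) /=.
apply: eq_big => x; first by rewrite contains_act.
rewrite contains_act // => hx.
rewrite mulrA (Dw_act theta q (r:=x) Heq hk1 hkm1 hkN) ?hF ?mulrA //.
exact: incr_contains hkm hx hr.
Qed.

Lemma Sw_act (R : realFieldType) N c (theta : R) k (q : 'S_k) m (r : 'S_m) :
  prefix_equivariant N c -> 0 < theta -> (1 <= k)%N -> (k < m)%N -> (k <= N)%N ->
  incr k r -> Sw N c theta (act q r) = Sw N c theta r.
Proof.
move=> Heq ht hk1 hkm hkN hr.
rewrite !Sw_numat; apply: (@ratio _ (theta ^+ c k 1%g) (theta ^+ c k q)).
- by rewrite expf_neq0 // gt_eqF.
- by rewrite expf_neq0 // gt_eqF.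
- rewrite (numat_act theta q (r:=r)) ?(ltnW hkm) //; congr (_ * numat _ _ _ _ _).
  rewrite /ev ifN //; rewrite -leqNgt; case: m r hr hkm {hkN} => // m r hr hkm.
- by rewrite (Dw_act theta q (r:=r)) ?(ltnW hkm).
Qed.

Lemma Sbar_act (R : realFieldType) N c (theta : R) k (q : 'S_k) f :
  prefix_equivariant N c -> 0 < theta -> (1 <= k)%N -> (k <= N)%N ->
  forall m (r : 'S_m), (k < m)%N -> incr k r ->
  Sbar_f N c theta f (act q r) = Sbar_f N c theta f r.
Proof.
move=> Heq ht hk1 hkN; elim: f => [|f IH] m r hkm hr /=.
  by rewrite (Sw_act q Heq ht hk1 hkm hkN hr).
rewrite (Sw_act q Heq ht hk1 hkm hkN hr); congr (Num.max _ _).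
case: ifP => // _.
apply: (@ratio _ (theta ^+ c k 1%g) (theta ^+ c k q)).
- by rewrite expf_neq0 // gt_eqF.
- by rewrite expf_neq0 // gt_eqF.
- apply: sum_act => //; first exact: ltnW.
  move=> x hx; apply: IH; first exact: ltnW.
  exact: incr_contains (ltnW hkm) hx hr.
- by rewrite (Dw_act theta q (r:=r)) ?(ltnW hkm).
Qed.

Lemma Sc_act (R : realFieldType) N c (theta : R) k (q : 'S_k) m (r : 'S_m) :
  prefix_equivariant N c -> 0 < theta -> (1 <= k)%N -> (k <= m)%N -> (k <= N)%N ->
  incr k r -> Sc N c theta (act q r) = Sc N c theta r.
Proof.
move=> Heq ht hk1 hkm hkN hr; rewrite /Sc; case: ifP => // _.
apply: (@ratio _ (theta ^+ c k 1%g) (theta ^+ c k q)).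
- by rewrite expf_neq0 // gt_eqF.
- by rewrite expf_neq0 // gt_eqF.
- apply: sum_act => // x hx; apply: Sbar_act => //.
  exact: incr_contains hkm hx hr.
- by rewrite (Dw_act theta q (r:=r)).
Qed.

Lemma Dw_ge0 (R : realFieldType) N c (theta : R) m (p : 'S_m) :
  0 < theta -> 0 <= Dw N c theta p.
Proof. by move=> ht; apply: sumr_ge0 => i _; rewrite exprn_ge0 // ltW. Qed.

Lemma numat_ge0 (R : realFieldType) N c (theta : R) m (p : 'S_m) j :
  0 < theta -> 0 <= numat N c theta p j.
Proof. by move=> ht; apply: sumr_ge0 => i _; rewrite exprn_ge0 // ltW. Qed.

Lemma Sw_ge0 (R : realFieldType) N c (theta : R) m (p : 'S_m) :
  0 < theta -> 0 <= Sw N c theta p.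
Proof.
by move=> ht; rewrite Sw_numat divr_ge0 ?numat_ge0 ?Dw_ge0.
Qed.

Lemma Sbar_ge0 (R : realFieldType) N c (theta : R) f m (p : 'S_m) :
  0 < theta -> 0 <= Sbar_f N c theta f p.
Proof.
by move=> ht; case: f => [|f] /=; rewrite le_max Sw_ge0.
Qed.

Lemma Dw_gt0 (R : realFieldType) N c (theta : R) m (p : 'S_m) (pi : 'S_N) :
  0 < theta -> contains pi p -> 0 < Dw N c theta p.
Proof.
move=> ht hpi; rewrite /Dw (bigD1 pi) //=.
have h1 : 0 < theta ^+ c N pi by rewrite exprn_gt0.
have h2 : 0 <= \sum_(i | contains i p && (i != pi)) theta ^+ c N i.
  by apply: sumr_ge0 => i _; rewrite exprn_ge0 // ltW.
lra.
Qed.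

Lemma q0_pval K i : (i < K.+1)%N ->
  pval (tperm (inord K) (inord K.+1) : 'S_K.+2) i = if i == K then K.+1 else i.
Proof.
move=> hi; have hi2 : (i < K.+2)%N by exact: ltn_trans hi (ltnSn _).
rewrite (pvalE' _ hi2).
have hK : (K < K.+2)%N by exact: leqW (ltnSn K).
have eo : Ordinal hi2 = (inord i : 'I_K.+2) by apply: val_inj; rewrite /= inordK.
rewrite eo; case: eqP => [->|hne].
  by rewrite tpermL inordK.
rewrite tpermD ?inordK //.
- by apply/eqP => /(congr1 val) /=; rewrite !inordK // => e; apply: hne.
- apply/eqP => /(congr1 val) /=; rewrite !inordK // => e; move: hi; rewrite -e ltnn.
  done.
Qed.

Theorem corollary3p7 (R : realFieldType) (N : nat)
  (c : forall m : nat, 'S_m -> nat) (theta : R) :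
  prefix_equivariant N c -> (0 < theta)%R ->
  forall k : nat, (2 <= k)%N -> (k <= N)%N ->
  negative N c theta (1%g : 'S_k) -> negative N c theta (1%g : 'S_k.-1).
Proof.
move=> Heq ht k hk2 hkN; case: k hk2 hkN => [|[|K]] // _ hkN Hneg.
have hkN' : (K.+2 < N)%N.
  rewrite ltn_neqAle hkN andbT; apply/eqP => eN; subst N.
  move: Hneg; rewrite /negative /Sc ltnn.
  by have := @Sw_ge0 R K.+2 c theta _ (1%g : 'S_K.+2) ht; rewrite leNgt => /negbTE ->.
set e := (1%g : 'S_K.+2); set e' := (1%g : 'S_K.+1).
rewrite /negative /Sc (ltn_trans (ltnSn _) hkN') Sw_numat /=.
have hDe' : 0 < Dw N c theta e'.
  apply: (@Dw_gt0 R N c theta _ _ 1%g) => //; apply: contains11; exact: ltnW.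
have hDe : 0 < Dw N c theta e.
  apply: (@Dw_gt0 R N c theta _ _ 1%g) => //; apply: contains11; exact: ltnW.
rewrite ltr_pM2r ?invr_gt0 //.
set A := theta ^+ c K.+2 1%g.
pose P := fun q : 'S_K.+2 => contains q e' && (pval q K == K.+1).
pose T := \sum_(q | P q) theta ^+ c K.+2 q.
have hA : 0 < A by rewrite exprn_gt0.
have hie : incr K.+2 e by exact: incr1.
have hK : (K < K.+2)%N by exact: leqW (ltnSn K).
have evK q : P q -> ev q K = K.+1.
  by move=> /andP [_ /eqP h]; rewrite /ev hK h.
have F1 : A * numat N c theta e' K <= T * (Dw N c theta e * Sw N c theta e).
  have cover : numat N c theta e' K <= \sum_(q | P q) numat N c theta q K.
    have -> : \sum_(q | P q) numat N c theta q K = \sum_(q | P q) \sum_(pi : 'S_N)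
       (if contains pi q && (pval pi K == N.-1) then theta ^+ c N pi else 0).
      by apply: eq_bigr => q _; rewrite /numat big_mkcond.
    rewrite /numat.
    rewrite exchange_big /= big_mkcond /=.
    apply: ler_sum => pi _.
    case: ifP => [/andP [hpe hpK]|_]; last first.
      by apply: sumr_ge0 => q _; case: ifP => // _; rewrite exprn_ge0 // ltW.
    have [q [hpq hq]] := pattern_exists pi (ltnW hkN').
    have hPq : P q.
      apply/andP; split; first exact: contains_sub (leqnSn _) hpq hpe.
      have := hq (Ordinal hK); rewrite /= => ->.
      rewrite /rnk.
      have -> : #|[pred j : 'I_K.+2 | (pval pi j < pval pi K)%N]| =
                #|predC1 (Ordinal hK)|.
        apply: eq_card => j; rewrite !inE.
        have hjN : (j < N)%N by exact: ltn_trans (ltn_ord j) hkN'.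
        have hpK' := eqP hpK.
        have hlt := pval_lt pi hjN.
        case: eqP => [->|hne] /=; first by rewrite hpK' ltnn.
        have hne2 : pval pi j != N.-1.
          rewrite -hpK'; apply/eqP => /(pval_injl hjN (ltn_trans hK hkN')) hjK.
          by apply: hne; apply: val_inj.
        rewrite hpK'; apply/idP; move: hlt hne2; clear; lia.
      by rewrite cardC1 card_ord.
    rewrite (bigD1 q) //=.
    set S := \sum_(i | _) _.
    have : 0 <= S.
      by apply: sumr_ge0 => i _; case: ifP => // _; rewrite exprn_ge0 // ltW.
    rewrite hpq hpK /=; lra.
  apply: le_trans (ler_wpM2l (ltW hA) cover) _.
  rewrite /T mulr_sumr mulr_suml; apply/ler_sum => q hPq.
  rewrite -{1}(act1 q) (numat_act theta q (r:=e)) //.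
  rewrite evK // (_ : numat N c theta e K.+1 = Dw N c theta e * Sw N c theta e) //.
  by rewrite Sw_numat /= mulrC divfK // gt_eqF.
have F2 : T * (Dw N c theta e * Sc N c theta e) <=
   A * \sum_(q : 'S_K.+2 | contains q e') Dw N c theta q * Sbar_f N c theta (N - K.+2) q.
  have step1 : T * (Dw N c theta e * Sc N c theta e) =
      A * \sum_(q | P q) Dw N c theta q * Sc N c theta e.
    rewrite /T mulr_sumr mulr_suml; apply: eq_bigr => q hPq.
    by rewrite mulrA -(Dw_act theta q (r:=e)) // act1 mulrA.
  rewrite step1; apply: ler_wpM2l; first exact: ltW.
  rewrite [X in _ <= X](bigID (fun q : 'S_K.+2 => pval q K == K.+1)) /=.
  have h2 : 0 <= \sum_(i : 'S_K.+2 | contains i e' && (pval i K != K.+1))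
             Dw N c theta i * Sbar_f N c theta (N - K.+2) i.
    by apply: sumr_ge0 => i _; rewrite mulr_ge0 ?Dw_ge0 ?Sbar_ge0.
  suff : \sum_(q | P q) Dw N c theta q * Sc N c theta e <=
         \sum_(i : 'S_K.+2 | contains i e' && (pval i K == K.+1))
             Dw N c theta i * Sbar_f N c theta (N - K.+2) i.
    by move=> h; apply: (le_trans h); rewrite lerDl.
  apply: ler_sum => q hPq; apply: ler_wpM2l; first exact: Dw_ge0.
  rewrite -(Sc_act (theta:=theta) q (r:=e) Heq ht) // act1.
  rewrite -(subnSK hkN') /= le_max; apply/orP; right.
  by rewrite /Sc hkN'.
have hT : 0 < T.
  pose q0 := (tperm (inord K) (inord K.+1) : 'S_K.+2).
  have hPq0 : P q0.
    apply/andP; split.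
      apply/containsE; split=> // i j hi hj.
      rewrite !q0_pval // !pval1 //.
      case: eqP => ei; case: eqP => ej; subst => //; lia.
    have hK1 : (K < K.+1)%N by [].
    by rewrite q0_pval // eqxx.
  rewrite /T (bigD1 q0) //=.
  have : 0 <= \sum_(i | P i && (i != q0)) theta ^+ c K.+2 i.
    by apply: sumr_ge0 => i _; rewrite exprn_ge0 // ltW.
  have : 0 < theta ^+ c K.+2 q0 by rewrite exprn_gt0.
  lra.
have key : T * (Dw N c theta e * Sw N c theta e) < T * (Dw N c theta e * Sc N c theta e).
  by rewrite ltr_pM2l // ltr_pM2l.
have : A * numat N c theta e' K <
  A * \sum_(q : 'S_K.+2 | contains q e') Dw N c theta q * Sbar_f N c theta (N - K.+2) q.
  exact: le_lt_trans F1 (lt_le_trans key F2).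
by rewrite ltr_pM2l.
Qed.
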